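(* Let $A$ be an $n$-by-$n$ doubly nonnegative matrix, written as $A=UDU^T$ with $U=[u_{ij}]$ real orthogonal and $D=\mathrm{diag}(\lambda_1,\dots,\lambda_n)$, $\lambda_1\ge\lambda_2\ge\cdots\ge\lambda_n\ge 0$, and let $W=[w_{ij}]$ be the corresponding sign change matrix. Then every diagonal entry of $W$ is zero, every row and every column of $W$ contains at most one entry equal to $n-1$, and all remaining entries of $W$ are at most $n-2$.
   Context: A real matrix is doubly nonnegative if it is symmetric, positive semidefinite, and entry-wise nonnegative. With $A=UDU^T$ as in the claim and $t>0$, $A^t=UD^tU^T$, so $(A^t)_{ij}=u_{i1}u_{j1}\lambda_1^t+\cdots+u_{in}u_{jn}\lambda_n^t$, an exponential polynomial in $t$. The sign change matrix $W=[w_{ij}]$ is defined by letting $w_{ij}$ be the number of sign changes in the sequence of coefficients $(u_{i1}u_{j1},u_{i2}u_{j2},\dots,u_{in}u_{jn})$ of this exponential polynomial, arranged in decreasing order of the corresponding eigenvalues (zero coefficients being ignored when counting sign changes). *)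

(* Defs.v *)
From HB Require Import structures.
From mathcomp Require Import all_boot all_order all_algebra.
Set Implicit Arguments. Unset Strict Implicit. Unset Printing Implicit Defensive.
Import Order.TTheory GRing.Theory Num.Theory.
Local Open Scope ring_scope.

Definition doubly_nonnegative (R : realFieldType) (n : nat) (A : 'M[R]_n) : Prop :=
  [/\ A^T = A,
      (forall x : 'cV[R]_n, 0 <= (x^T *m A *m x) 0 0)
    & (forall i j, 0 <= A i j)].

Definition sign_changes (R : realFieldType) (s : seq R) : nat :=
  let t := [seq x <- s | x != 0] in
  count (fun p : R * R => p.1 * p.2 < 0) (zip t (behead t)).

Definition sign_change_matrix (R : realFieldType) (n : nat) (U : 'M[R]_n)
  : 'M[nat]_n :=
  \matrix_(i, j) sign_changes [seq U i k * U j k | k <- enum 'I_n].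

(* Main.v *)
Require Import Defs.
From HB Require Import structures.
From mathcomp Require Import all_boot all_order all_algebra.
From mathcomp Require Import zify ring lra.
Import Order.TTheory GRing.Theory Num.Theory.
Local Open Scope ring_scope.

Lemma cnt_pairs (T : Type) (p : pred (T * T)) (s : seq T) :
  (count p (zip s (behead s)) <= (size s).-1)%N.
Proof.
elim: s => [//|x [|y r] IH] //=.
rewrite /= in IH; move: IH; case: (p (x, y)) => /=; lia.
Qed.

Lemma cnt_pairs_eq (T : Type) (x0 : T) (p : pred (T * T)) (s : seq T) :
  count p (zip s (behead s)) = (size s).-1 ->
  forall m, (m.+1 < size s)%N -> p (nth x0 s m, nth x0 s m.+1).
Proof.
elim: s => [//|x [|y r] IH] //= H [|m] Hm /=.
- have := cnt_pairs _ p (y :: r); move: H; case: (p (x, y)) => //=; lia.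
- apply: (IH _ m) => //.
  have := cnt_pairs _ p (y :: r); move: H; case: (p (x, y)) => /=; lia.
Qed.

Lemma sc_le (R : realFieldType) (s : seq R) : (sign_changes s <= (size s).-1)%N.
Proof.
rewrite /sign_changes; apply: leq_trans (cnt_pairs _ _ _) _.
by rewrite size_filter -!subn1 leq_sub2r // count_size.
Qed.

Lemma natfact (a b : nat) : (1 < b)%N -> (a <= b)%N -> (b.-1 <= a.-1)%N -> a = b.
Proof. lia. Qed.

Lemma sc_eq (R : realFieldType) (s : seq R) : (1 < size s)%N ->
  sign_changes s = (size s).-1 ->
  forall m, (m.+1 < size s)%N -> s`_m * s`_m.+1 < 0.
Proof.
move=> H2 Hs.
have Ht : [seq x <- s | x != 0] = s.
  apply/all_filterP; rewrite all_count; apply/eqP.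
  have := cnt_pairs _ (fun p : R * R => p.1 * p.2 < 0) [seq x <- s | x != 0].
  rewrite -/(sign_changes s) Hs size_filter => h.
  exact: (natfact _ _ H2 (count_size _ _) h).
move: Hs; rewrite /sign_changes Ht => Hs m Hm.
exact: (cnt_pairs_eq _ 0 _ _ Hs _ Hm).
Qed.

Lemma pos_trans (R : realFieldType) (a b c : R) : 0 < a * b -> 0 < b * c -> 0 < a * c.
Proof.
move=> h1 h2.
have : 0 < (a * b) * (b * c) by rewrite mulr_gt0.
have -> : (a * b) * (b * c) = (b * b) * (a * c) by ring.
have [hb|hb|hb] := ltgtP b 0.
- by rewrite pmulr_rgt0 // nmulr_rgt0.
- by rewrite pmulr_rgt0 // pmulr_rgt0.
- by move: h1; rewrite hb mulr0 ltxx.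
Qed.

Lemma sq_pos (R : realFieldType) (x : R) : x != 0 -> 0 < x * x.
Proof.
move=> hx; have [h|h|h] := ltgtP x 0.
- by rewrite nmulr_rgt0.
- by rewrite mulr_gt0.
- by rewrite h eqxx in hx.
Qed.

Lemma pos_cancel (R : realFieldType) (a b : R) : 0 <= a -> 0 < a * b -> 0 < b.
Proof.
rewrite le_eqVlt => /orP [/eqP <-|ha]; first by rewrite mul0r ltxx.
by rewrite pmulr_rgt0.
Qed.

Lemma W_sym (R : realFieldType) (n : nat) (U : 'M[R]_n) i j :
  sign_change_matrix U i j = sign_change_matrix U j i.
Proof.
rewrite !mxE; congr sign_changes; apply: eq_map => m; exact: mulrC.
Qed.

Lemma consec (R : realFieldType) (n : nat) (U : 'M[R]_n.+2) i j :
  sign_change_matrix U i j = n.+1 ->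
  forall m, (m.+1 < n.+2)%N ->
    (U i (inord m) * U j (inord m)) * (U i (inord m.+1) * U j (inord m.+1)) < 0.
Proof.
rewrite mxE => h m hm.
set s := [seq U i k * U j k | k <- enum 'I_n.+2] in h.
have hs : size s = n.+2 by rewrite size_map size_enum_ord.
have hn : forall q, (q < n.+2)%N -> s`_q = U i (inord q) * U j (inord q).
  move=> q hq; rewrite (nth_map ord0) ?size_enum_ord //.
  have -> // : nth ord0 (enum 'I_n.+2) q = inord q.
  by apply: val_inj; rewrite /= nth_enum_ord // inordK.
rewrite -(hn m) ?(ltnW hm) // -(hn m.+1) //.
by apply: sc_eq; rewrite hs.
Qed.

Lemma row_unique (R : realFieldType) (n : nat) (U : 'M[R]_n)
  (hU : U *m U^T = 1%:M) i j k :
  sign_change_matrix U i j = n.-1 -> sign_change_matrix U i k = n.-1 -> j = k.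
Proof.
case: n U i j k hU => [|[|n]] U i j k hU.
- by case: i.
- by move=> _ _; rewrite (ord1 j) (ord1 k).
move=> /= hj hk; apply/eqP; apply/negPn/negP => hne.
pose g (m : 'I_n.+2) := (U i m * U j m) * (U i m * U k m).
have hc := consec _ _ _ _ _ hj; have hd := consec _ _ _ _ _ hk.
have hg0 : g ord0 != 0.
  rewrite /g mulf_neq0 //.
    have := hc 0%N isT; rewrite -[inord 0]/(inord (@ord0 n.+1)) inord_val.
    by apply: contraTneq => ->; rewrite mul0r ltxx.
  have := hd 0%N isT; rewrite -[inord 0]/(inord (@ord0 n.+1)) inord_val.
  by apply: contraTneq => ->; rewrite mul0r ltxx.
have hpos : forall q, (q < n.+2)%N -> 0 < g ord0 * g (inord q).
  elim=> [|q IH] hq.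
    by rewrite -[inord 0]/(inord (@ord0 n.+1)) inord_val sq_pos.
  apply: (pos_trans _ (g ord0) (g (inord q)) (g (inord q.+1))); first by apply: IH; exact: ltnW.
  have -> : g (inord q) * g (inord q.+1) =
    ((U i (inord q) * U j (inord q)) * (U i (inord q.+1) * U j (inord q.+1))) *
    ((U i (inord q) * U k (inord q)) * (U i (inord q.+1) * U k (inord q.+1))).
    by rewrite /g; ring.
  by rewrite nmulr_rgt0 ?hc ?hd.
have hf : forall m : 'I_n.+2, 0 < g ord0 * (U j m * U k m).
  move=> m; have := hpos m (ltn_ord m); rewrite inord_val.
  have -> : g ord0 * g m = (U i m * U i m) * (g ord0 * (U j m * U k m)).
    by rewrite /g; ring.
  apply: pos_cancel; rewrite -expr2; exact: sqr_ge0.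
have hsum : \sum_m U j m * U k m = 0.
  have := congr1 (fun M : 'M[R]_n.+2 => M j k) hU; rewrite !mxE (negbTE hne) /=.
  by move=> H; rewrite -[RHS](_ : 0%:R = 0) // -H; apply: eq_bigr => m _; rewrite mxE.
have : 0 < g ord0 * \sum_m U j m * U k m.
  rewrite mulr_sumr (bigD1 ord0) //=; apply: ltr_wpDr; last exact: hf.
  by apply: sumr_ge0 => m0 _; apply: ltW.
by rewrite hsum mulr0 ltxx.
Qed.

Lemma zip_nonneg (R : realFieldType) (t : seq R) : all (fun x => 0 <= x) t ->
  ~~ has (fun p : R * R => p.1 * p.2 < 0) (zip t (behead t)).
Proof.
elim: t => [//|x [|y r] IH] //= /andP [hx hyr].
rewrite negb_or IH // andbT -leNgt mulr_ge0 //.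
by case/andP: hyr.
Qed.

Theorem lemma2p3 (R : realFieldType) (n : nat) (A U : 'M[R]_n) (lam : 'I_n -> R)
  (hA : doubly_nonnegative A)
  (hU : U *m U^T = 1%:M)
  (hdec : A = U *m diag_mx (\row_i lam i) *m U^T)
  (hord : forall i j : 'I_n, (i <= j)%N -> lam j <= lam i)
  (hlam : forall i, 0 <= lam i) :
  let W := sign_change_matrix U in
  [/\ (forall i, W i i = 0%N),
      (forall i j k, W i j = n.-1 -> W i k = n.-1 -> j = k),
      (forall i j k, W i j = n.-1 -> W k j = n.-1 -> i = k)
    & (forall i j, W i j <> n.-1 -> (W i j <= n.-2)%N)].
Proof.
move=> W; split.
- move=> i; rewrite /W mxE /sign_changes; apply/eqP; rewrite -leqn0 leqNgt -has_count.
  apply: zip_nonneg; rewrite all_filter; apply/allP => x /mapP [m _ ->].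
  by apply/implyP => _; rewrite -expr2 sqr_ge0.
- move=> i j k; exact: (row_unique _ _ _ hU i j k).
- move=> i j k hi hk; apply: (row_unique _ _ _ hU j i k); by rewrite W_sym.
- move=> i j hne; have := sc_le _ [seq U i k * U j k | k <- enum 'I_n].
  rewrite size_map size_enum_ord /W mxE in hne *; lia.
Qed.
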